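(* Consider the continuous-time partial duplication graph $(\Gamma_t)_{t\geq0}$ with parameter $p\in(0,1]$, started from a fixed connected graph $\Gamma_0$ with $n_0>1$ vertices, with the tracked vertex process $(V_t)_{t\geq0}$ and the uniform vertex process $(U_t)_{t\geq0}$ defined below. For every $\varepsilon>0$ there exists $v_\varepsilon$ such that for all vertex labels $v\geq v_\varepsilon$ and all $t>0$, $$1\leq\frac{\mathbb P(V_t=v)}{\mathbb P(U_t=v)}\leq 1+\varepsilon.$$
   Context: Continuous-time model: each vertex duplicates at the times of an independent rate-$1$ Poisson process; when vertex $u$ duplicates, a new vertex is added and joined to each current neighbour of $u$ independently with probability $p$ (and to nothing else). Vertices of $\Gamma_0$ are labelled $1,\dots,n_0$ and later vertices are labelled $n_0+1,n_0+2,\dots$ in order of arrival; $N_t$ is the number of vertices at time $t$. Tracked vertex: $V_0$ is uniform on the vertices of $\Gamma_0$, and $V$ jumps at time $t$ exactly when the vertex $V_{t-}$ duplicates, moving to the newly created vertex. Uniform vertex process: $U_0$ is uniform on the vertices of $\Gamma_0$, and each time a vertex is added, $U$ moves to a vertex chosen uniformly at random from the vertices of the new graph, so that $\mathbb P(U_t=v\mid N_t=n)=1/n$ for $v\leq n$. *)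

(* Defs.v *)
From Stdlib Require Import Reals Relations.
From Coquelicot Require Import Coquelicot.
Open Scope R_scope.

Definition simple_graph (n0 : nat) (adj : nat -> nat -> Prop) : Prop :=
  (forall u v, adj u v -> (1 <= u <= n0)%nat /\ (1 <= v <= n0)%nat) /\
  (forall u v, adj u v -> adj v u) /\
  (forall u, ~ adj u u).

Definition graph_connected (n0 : nat) (adj : nat -> nat -> Prop) : Prop :=
  forall u v, (1 <= u <= n0)%nat -> (1 <= v <= n0)%nat ->
    clos_refl_trans nat adj u v.

(* The continuous-time process, built as a jump chain + holding times.  *)
(* After k jumps (duplication events) there are n0+k vertices; every    *)
(* vertex duplicates at rate 1, so the total jump rate is n0+k, and the *)
(* duplicating vertex is uniform among the n0+k current vertices.       *)
(* Edges never influence the vertex labels, N_t, V_t or U_t.            *)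

(* q n0 k v = P(tracked vertex has label v after k jumps). *)
Fixpoint tracked_jump (n0 k v : nat) : R :=
  match k with
  | O => if andb (Nat.leb 1 v) (Nat.leb v n0) then / INR n0 else 0
  | S k' =>
      let n := (n0 + k')%nat in
      if Nat.leb v n then
        (* the duplicating vertex is not V (prob 1 - 1/n): V stays *)
        tracked_jump n0 k' v * (1 - / INR n)
      else if Nat.eqb v (S n) then
        (* the duplicating vertex is V (prob 1/n): V moves to new vertex n+1 *)
        sum_f_R0 (fun u => tracked_jump n0 k' u * / INR n) n
      else 0
  end.

Definition uniform_jump (n0 k v : nat) : R :=
  if andb (Nat.leb 1 v) (Nat.leb v (n0 + k)) then / INR (n0 + k) else 0.

Definition jump_rate (n0 k : nat) : R := INR (n0 + k).

(* jump_cdf n0 k t = P(T_k <= t), where T_k = E_0 + ... + E_{k-1} is the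
   time of the k-th jump, with E_j ~ Exp(n0 + j) independent.
   Defined by convolution: T_{k+1} = T_k + E_k. *)
Fixpoint jump_cdf (n0 k : nat) (t : R) : R :=
  match k with
  | O => if Rle_dec 0 t then 1 else 0
  | S k' =>
      if Rle_dec 0 t then
        RInt (fun s => jump_rate n0 k' * exp (- (jump_rate n0 k' * s))
                       * jump_cdf n0 k' (t - s)) 0 t
      else 0
  end.

(* P(exactly k jumps by time t) = P(T_k <= t < T_{k+1}). *)
Definition njumps_prob (n0 k : nat) (t : R) : R :=
  jump_cdf n0 k t - jump_cdf n0 (S k) t.

Definition PV (n0 : nat) (t : R) (v : nat) : R :=
  Series (fun k => tracked_jump n0 k v * njumps_prob n0 k t).

Definition PU (n0 : nat) (t : R) (v : nat) : R :=
  Series (fun k => uniform_jump n0 k v * njumps_prob n0 k t).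

(* Main.v *)
Require Import Defs.
From Stdlib Require Import Reals Relations Lia Lra.
From Coquelicot Require Import Coquelicot.
Open Scope R_scope.

Lemma tj_S n0 k v : tracked_jump n0 (S k) v =
  if Nat.leb v (n0 + k) then tracked_jump n0 k v * (1 - / INR (n0 + k))
  else if Nat.eqb v (S (n0 + k)) then
    sum_f_R0 (fun u => tracked_jump n0 k u * / INR (n0 + k)) (n0 + k)
  else 0.
Proof. reflexivity. Qed.

Lemma tj_0 n0 v : tracked_jump n0 0 v =
  if andb (Nat.leb 1 v) (Nat.leb v n0) then / INR n0 else 0.
Proof. reflexivity. Qed.

Lemma tj_zero n0 k u : (n0 + k < u)%nat -> tracked_jump n0 k u = 0.
Proof.
  revert u; induction k as [|k IH]; intros u Hu.
  - rewrite tj_0. replace (Nat.leb u n0) with false by (symmetry; apply Nat.leb_gt; lia).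
    rewrite Bool.andb_false_r; reflexivity.
  - rewrite tj_S. replace (Nat.leb u (n0 + k)) with false by (symmetry; apply Nat.leb_gt; lia).
    replace (Nat.eqb u (S (n0 + k))) with false by (symmetry; apply Nat.eqb_neq; lia).
    reflexivity.
Qed.

Lemma sum0_aux n0 m : (1 <= n0)%nat -> (m <= n0)%nat ->
  sum_f_R0 (tracked_jump n0 0) m = INR m / INR n0.
Proof.
  intros H1. induction m as [|m IH]; intros Hm.
  - simpl. unfold Rdiv. ring.
  - change (sum_f_R0 (tracked_jump n0 0) m + tracked_jump n0 0 (S m) = INR (S m) / INR n0). rewrite IH by lia. rewrite tj_0.
    replace (Nat.leb 1 (S m)) with true by (symmetry; apply Nat.leb_le; lia).
    replace (Nat.leb (S m) n0) with true by (symmetry; apply Nat.leb_le; lia).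
    simpl andb. rewrite S_INR. unfold Rdiv. ring.
Qed.

Lemma tj_sum n0 k : (1 <= n0)%nat -> sum_f_R0 (tracked_jump n0 k) (n0 + k) = 1.
Proof.
  intros H1. induction k as [|k IH].
  - rewrite Nat.add_0_r, sum0_aux by lia. field. apply not_0_INR; lia.
  - replace (n0 + S k)%nat with (S (n0 + k)) by lia.
    rewrite tech5.
    assert (Hn : INR (n0 + k) <> 0) by (apply not_0_INR; lia).
    rewrite (sum_eq _ (fun u => tracked_jump n0 k u * (1 - / INR (n0 + k)))).
    2:{ intros i Hi. rewrite tj_S. replace (Nat.leb i (n0 + k)) with true by (symmetry; apply Nat.leb_le; lia). reflexivity. }
    rewrite <- scal_sum, IH.
    rewrite tj_S. replace (Nat.leb (S (n0 + k)) (n0 + k)) with false by (symmetry; apply Nat.leb_gt; lia).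
    rewrite Nat.eqb_refl. rewrite <- scal_sum, IH. field. exact Hn.
Qed.

Lemma tj_closed n0 k v : (2 <= n0)%nat -> (n0 < v)%nat ->
  tracked_jump n0 k v = if Nat.leb v (n0 + k) then / (INR (n0 + k) - 1) else 0.
Proof.
  intros H2 Hv. induction k as [|k IH].
  - rewrite tj_0. rewrite Nat.add_0_r.
    replace (Nat.leb v n0) with false by (symmetry; apply Nat.leb_gt; lia).
    rewrite Bool.andb_false_r; reflexivity.
  - rewrite tj_S. replace (n0 + S k)%nat with (S (n0 + k)) by lia. rewrite S_INR.
    destruct (Nat.leb v (n0 + k)) eqn:E.
    + apply Nat.leb_le in E. rewrite IH.
      replace (Nat.leb v (S (n0 + k))) with true by (symmetry; apply Nat.leb_le; lia).
      assert (HI : INR (n0 + k) >= 3) by (replace 3 with (INR 3) by (simpl; ring); apply Rle_ge, le_INR; lia).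
      field. lra.
    + apply Nat.leb_gt in E. destruct (Nat.eqb v (S (n0 + k))) eqn:E2.
      * apply Nat.eqb_eq in E2. subst v. rewrite Nat.leb_refl.
        rewrite <- scal_sum, tj_sum by lia.
        assert (HI : INR (n0 + k) >= 2) by (replace 2 with (INR 2) by (simpl; ring); apply Rle_ge, le_INR; lia).
        field. lra.
      * apply Nat.eqb_neq in E2.
        replace (Nat.leb v (S (n0 + k))) with false by (symmetry; apply Nat.leb_gt; lia). reflexivity.
Qed.
Definition hh (lam : R) (c : R -> R) (t s : R) := lam * exp (-(lam * s)) * c (t - s).
Definition II lam c t := RInt (hh lam c t) 0 t.

Lemma exd_cont (f : R -> R) x : ex_derive f x -> continuous f x.
Proof. apply (@ex_derive_continuous R_AbsRing R_NormedModule). Qed.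

Lemma cont_explin lam x : continuous (fun s => lam * exp (-(lam * s))) x.
Proof. apply exd_cont. auto_derive. auto. Qed.

Lemma cont_hh lam (c : R -> R) t : (forall x, continuous c x) -> forall s, continuous (hh lam c t) s.
Proof.
  intros Hc s. unfold hh.
  apply (continuous_mult (fun s => lam * exp (-(lam * s))) (fun s => c (t - s))).
  - apply cont_explin.
  - apply (continuous_comp (fun s => t - s) c).
    + apply exd_cont. auto_derive. auto.
    + apply Hc.
Qed.

Lemma ex_hh lam (c : R -> R) t a b : (forall x, continuous c x) -> ex_RInt (hh lam c t) a b.
Proof. intros Hc. apply (@ex_RInt_continuous R_CompleteNormedModule). intros; apply cont_hh; auto. Qed.

Lemma RInt_ext_R (f g : R -> R) a b : (forall x, Rmin a b < x < Rmax a b -> f x = g x) -> RInt f a b = RInt g a b.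
Proof. apply (RInt_ext (V:=R_CompleteNormedModule)). Qed.

Lemma RInt_scal_R (f : R -> R) a b k : ex_RInt f a b -> RInt (fun x => k * f x) a b = k * RInt f a b.
Proof. intros H. exact (RInt_scal (V:=R_CompleteNormedModule) f a b k H). Qed.

Lemma RInt_refl (g : R -> R) t : (forall x, continuous g x) ->
  RInt (fun s => g (t - s)) 0 t = RInt g 0 t.
Proof.
  intros Hg.
  assert (Hex : forall a b, ex_RInt g a b).
  { intros; apply (@ex_RInt_continuous R_CompleteNormedModule); intros; apply Hg. }
  assert (H := RInt_comp_lin (V:=R_CompleteNormedModule) g (-1) t 0 t).
  replace (-1 * 0 + t) with t in H by ring. replace (-1 * t + t) with 0 in H by ring.
  specialize (H (Hex _ _)).
  rewrite <- (opp_RInt_swap (V:=R_CompleteNormedModule) g) in H by apply Hex.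
  assert (H' : RInt (fun y => -1 * g (-1 * y + t)) 0 t = - RInt g 0 t) by exact H.
  transitivity (- RInt (fun y => -1 * g (-1 * y + t)) 0 t).
  2:{ rewrite H'. apply Ropp_involutive. }
  rewrite (RInt_scal_R (fun y => g (-1 * y + t))).
  2:{ apply (@ex_RInt_continuous R_CompleteNormedModule). intros z _.
      apply (continuous_comp (fun y => -1 * y + t) g). apply exd_cont; auto_derive; auto. apply Hg. }
  assert (E : forall x : R, - (-1 * x) = x) by (intros; ring). rewrite E.
  apply RInt_ext. intros; f_equal; ring.
Qed.

Lemma II_formula lam (c : R -> R) t : (forall x, continuous c x) ->
  II lam c t = lam * exp (-(lam * t)) * RInt (fun u => exp (lam * u) * c u) 0 t.
Proof.
  intros Hc. unfold II.
  set (g := fun u => exp (lam * u) * c u).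
  assert (Hg : forall x, continuous g x).
  { intros x. apply (continuous_mult (fun u => exp (lam * u)) c).
    apply exd_cont; auto_derive; auto. apply Hc. }
  rewrite (RInt_ext_R _ (fun s => (lam * exp (-(lam * t))) * (g (t - s)))).
  2:{ intros x _. unfold hh, g.
      replace (exp (- (lam * x))) with (exp (-(lam * t)) * exp (lam * (t - x))).
      ring. rewrite <- exp_plus. f_equal. ring. }
  rewrite RInt_scal_R.
  2:{ apply (@ex_RInt_continuous R_CompleteNormedModule). intros z _.
      apply (continuous_comp (fun s => t - s) g). apply exd_cont; auto_derive; auto. apply Hg. }
  f_equal. apply RInt_refl. exact Hg.
Qed.

Lemma cont_RInt0 (g : R -> R) x : (forall x, continuous g x) -> continuous (fun b => RInt g 0 b) x.
Proof.
  intros Hg. apply exd_cont. eexists.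
  apply (is_derive_RInt (V:=R_CompleteNormedModule) g (fun b => RInt g 0 b) 0 x).
  - apply filter_forall. intros b. apply (RInt_correct (V:=R_CompleteNormedModule)).
    apply (@ex_RInt_continuous R_CompleteNormedModule). intros; apply Hg.
  - apply Hg.
Qed.

Lemma cont_max0 x : continuous (fun u => Rmax u 0) x.
Proof.
  apply (continuous_ext (fun u => (u + Rabs u) / 2)).
  - intros u. unfold Rmax, Rabs. destruct (Rle_dec u 0); destruct (Rcase_abs u); lra.
  - apply (continuous_mult (fun u => u + Rabs u) (fun _ => / 2)).
    + apply (continuous_plus (fun u => u) Rabs). apply continuous_id. apply continuous_Rabs.
    + apply continuous_const.
Qed.

Lemma II_cont lam (c : R -> R) : (forall x, continuous c x) ->
  forall x, continuous (fun u => II lam c (Rmax u 0)) x.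
Proof.
  intros Hc x.
  set (g := fun u => exp (lam * u) * c u).
  assert (Hg : forall x, continuous g x).
  { intros y. apply (continuous_mult (fun u => exp (lam * u)) c).
    apply exd_cont; auto_derive; auto. apply Hc. }
  apply (continuous_ext (fun u => (fun t => lam * exp (-(lam * t)) * RInt g 0 t) (Rmax u 0))).
  - intros u. rewrite II_formula by exact Hc. reflexivity.
  - apply (continuous_comp (fun u => Rmax u 0) (fun t => lam * exp (-(lam * t)) * RInt g 0 t)).
    + apply cont_max0.
    + apply (continuous_mult (fun t => lam * exp (-(lam * t))) (fun t => RInt g 0 t)).
      * apply cont_explin.
      * apply cont_RInt0. exact Hg.
Qed.

Definition good (c : R -> R) :=
  (forall x, continuous c x) /\ (forall x y, x <= y -> c x <= c y) /\
  (forall x, 0 <= c x) /\ (forall x, 0 < x -> 0 < c x).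

Lemma hh_nonneg lam c t s : 0 < lam -> good c -> 0 <= hh lam c t s.
Proof.
  intros Hl (Hc & Hm & Hp & Hs). unfold hh.
  apply Rmult_le_pos; [apply Rmult_le_pos; [lra | apply Rlt_le, exp_pos] | apply Hp].
Qed.

Lemma II_nonneg lam c t : 0 < lam -> good c -> 0 <= t -> 0 <= II lam c t.
Proof.
  intros Hl Hg Ht. unfold II. apply RInt_ge_0; auto.
  - apply ex_hh, Hg.
  - intros; apply hh_nonneg; auto.
Qed.

Lemma II_pos lam c t : 0 < lam -> good c -> 0 < t -> 0 < II lam c t.
Proof.
  intros Hl Hg Ht. unfold II. destruct Hg as (Hc & Hm & Hp & Hs).
  apply RInt_gt_0; auto.
  - intros x Hx. unfold hh. apply Rmult_lt_0_compat; [apply Rmult_lt_0_compat; [lra | apply exp_pos] | apply Hs; lra].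
  - intros; apply cont_hh; auto.
Qed.

Lemma II_mono lam c t1 t2 : 0 < lam -> good c -> 0 <= t1 <= t2 -> II lam c t1 <= II lam c t2.
Proof.
  intros Hl Hg Ht. pose proof Hg as (Hc & Hm & Hp & Hs). unfold II.
  rewrite <- (RInt_Chasles (V:=R_CompleteNormedModule) (hh lam c t2) 0 t1 t2) by (apply ex_hh; auto).
  change (plus (RInt (hh lam c t2) 0 t1) (RInt (hh lam c t2) t1 t2)) with
    (RInt (hh lam c t2) 0 t1 + RInt (hh lam c t2) t1 t2).
  assert (0 <= RInt (hh lam c t2) t1 t2).
  { apply RInt_ge_0; [lra | apply ex_hh; auto | intros; apply hh_nonneg; auto]. }
  assert (RInt (hh lam c t1) 0 t1 <= RInt (hh lam c t2) 0 t1).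
  { apply RInt_le; [lra | apply ex_hh; auto | apply ex_hh; auto |].
    intros x Hx. unfold hh. apply Rmult_le_compat_l.
    apply Rmult_le_pos; [lra | apply Rlt_le, exp_pos]. apply Hm. lra. }
  lra.
Qed.

Lemma int_exp lam t : RInt (fun x => lam * exp (-(lam * x))) 0 t = 1 - exp (-(lam * t)).
Proof.
  apply is_RInt_unique.
  assert (H := is_RInt_derive (V:=R_CompleteNormedModule) (fun x => - exp (-(lam * x)))
     (fun x => lam * exp (-(lam * x))) 0 t).
  replace (1 - exp (-(lam * t))) with (minus (- exp (-(lam * t))) (- exp (-(lam * 0)))).
  - apply H.
    + intros x _. auto_derive; auto. ring.
    + intros; apply cont_explin.
  - unfold minus, plus, opp; simpl. rewrite Rmult_0_r, Ropp_0, exp_0. ring.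
Qed.

Lemma II_le lam c t : 0 < lam -> good c -> 0 <= t -> II lam c t <= c t * (1 - exp (-(lam * t))).
Proof.
  intros Hl Hg Ht. pose proof Hg as (Hc & Hm & Hp & Hs). unfold II.
  rewrite <- int_exp, <- RInt_scal_R.
  2:{ apply (@ex_RInt_continuous R_CompleteNormedModule). intros; apply cont_explin. }
  apply RInt_le; auto.
  - apply ex_hh; auto.
  - apply (@ex_RInt_continuous R_CompleteNormedModule). intros.
    apply (continuous_mult (fun _ => c t) (fun x => lam * exp (-(lam * x)))).
    apply continuous_const. apply cont_explin.
  - intros x Hx. unfold hh. rewrite Rmult_comm. apply Rmult_le_compat_r.
    apply Rmult_le_pos; [lra | apply Rlt_le, exp_pos]. apply Hm. lra.
Qed.

Definition cc n0 k u := jump_cdf n0 k (Rmax u 0).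

Lemma jc_S n0 k t : 0 <= t -> jump_cdf n0 (S k) t = II (jump_rate n0 k) (cc n0 k) t.
Proof.
  intros Ht. cbn [jump_cdf]. destruct (Rle_dec 0 t) as [_|]; [|lra].
  unfold II. apply RInt_ext_R. intros x Hx.
  rewrite Rmin_left, Rmax_right in Hx by lra.
  unfold hh, cc. rewrite Rmax_left by lra. reflexivity.
Qed.

Lemma rate_pos n0 k : (1 <= n0)%nat -> 0 < jump_rate n0 k.
Proof. intros; unfold jump_rate; apply lt_0_INR; lia. Qed.

Lemma cc_good n0 k : (1 <= n0)%nat -> good (cc n0 k).
Proof.
  intros H1. induction k as [|k IH].
  - assert (E : forall u, cc n0 0 u = 1).
    { intros u. unfold cc. cbn [jump_cdf]. destruct (Rle_dec 0 (Rmax u 0)) as [|n]; auto.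
      exfalso; apply n, Rmax_r. }
    repeat split.
    + intros x. apply (continuous_ext (fun _ => 1)). intros; rewrite E; auto. apply continuous_const.
    + intros; rewrite !E; lra.
    + intros; rewrite E; lra.
    + intros; rewrite E; lra.
  - assert (E : forall u, cc n0 (S k) u = II (jump_rate n0 k) (cc n0 k) (Rmax u 0)).
    { intros u. unfold cc at 1. apply jc_S, Rmax_r. }
    pose proof (rate_pos n0 k H1) as Hl.
    pose proof IH as (Hc & Hm & Hp & Hs).
    repeat split.
    + intros x. apply (continuous_ext (fun u => II (jump_rate n0 k) (cc n0 k) (Rmax u 0))).
      intros; rewrite E; auto. apply II_cont; auto.
    + intros x y Hxy. rewrite !E. apply II_mono; auto. split. apply Rmax_r.
      apply Rle_max_compat_r; auto.
    + intros; rewrite E; apply II_nonneg; auto. apply Rmax_r.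
    + intros x Hx; rewrite E; apply II_pos; auto. rewrite Rmax_left; lra.
Qed.

Lemma cc_eq n0 k t : 0 <= t -> cc n0 k t = jump_cdf n0 k t.
Proof. intros; unfold cc; rewrite Rmax_left; auto. Qed.

Lemma nj_pos n0 k t : (1 <= n0)%nat -> 0 < t -> 0 < njumps_prob n0 k t.
Proof.
  intros H1 Ht. unfold njumps_prob. rewrite jc_S by lra. rewrite <- cc_eq by lra.
  pose proof (cc_good n0 k H1) as Hg. pose proof (rate_pos n0 k H1) as Hl.
  pose proof (II_le _ _ t Hl Hg (Rlt_le _ _ Ht)).
  destruct Hg as (Hc & Hm & Hp & Hs).
  assert (0 < cc n0 k t * exp (- (jump_rate n0 k * t))).
  { apply Rmult_lt_0_compat. apply Hs; auto. apply exp_pos. }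
  lra.
Qed.

Lemma nj_sum n0 t N : (1 <= n0)%nat -> 0 < t -> sum_f_R0 (fun k => njumps_prob n0 k t) N <= 1.
Proof.
  intros H1 Ht.
  assert (E : sum_f_R0 (fun k => njumps_prob n0 k t) N = jump_cdf n0 0 t - jump_cdf n0 (S N) t).
  { induction N as [|N IH]. reflexivity. rewrite tech5, IH. unfold njumps_prob. ring. }
  assert (E0 : jump_cdf n0 0 t = 1) by (simpl; destruct (Rle_dec 0 t); [reflexivity|lra]).
  rewrite E, E0.
  rewrite <- (cc_eq n0 (S N)) by lra.
  destruct (cc_good n0 (S N) H1) as (_ & _ & Hp & _). specialize (Hp t). lra.
Qed.

Lemma nj_ex n0 t : (1 <= n0)%nat -> 0 < t -> ex_series (fun k => njumps_prob n0 k t).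
Proof.
  intros H1 Ht.
  destruct (ex_finite_lim_seq_incr (sum_n (fun k => njumps_prob n0 k t)) 1) as [l Hl].
  - intros n. rewrite !sum_n_Reals. rewrite tech5. pose proof (nj_pos n0 (S n) t H1 Ht). lra.
  - intros n. rewrite sum_n_Reals. apply nj_sum; auto.
  - exists l. exact Hl.
Qed.

Lemma ineq_main m e N : 0 < INR N -> / INR N < e -> INR N + 1 <= m -> 3 <= m ->
  / (m - 1) <= (1 + e) * / m.
Proof.
  intros HN He Hm H3.
  assert (0 < e) by (pose proof (Rinv_0_lt_compat _ HN); lra).
  assert (H1 : 1 < e * INR N).
  { apply (Rmult_lt_compat_r (INR N)) in He; auto. rewrite Rinv_l in He by lra. lra. }
  assert (E : / (m - 1) = (1 + e) * / m - (e * (m - 1) - 1) / (m * (m - 1))) by (field; lra).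
  rewrite E. assert (0 <= (e * (m - 1) - 1) / (m * (m - 1))).
  { apply Rdiv_le_0_compat. assert (e * INR N <= e * (m - 1)).
    apply Rmult_le_compat_l; lra. lra. apply Rmult_lt_0_compat; lra. }
  lra.
Qed.

Lemma sum_ge_last (b : nat -> R) K : (forall n, 0 <= b n) -> b K <= sum_f_R0 b K.
Proof.
  intros Hb. destruct K. simpl; lra. rewrite tech5.
  pose proof (cond_pos_sum b K Hb). lra.
Qed.

Lemma series_pos (b : nat -> R) K : (forall n, 0 <= b n) -> 0 < b K -> ex_series b -> 0 < Series b.
Proof.
  intros Hb HK Hex.
  rewrite (Series_incr_n b (S K)) by (lia || exact Hex).
  simpl pred. pose proof (sum_ge_last b K Hb).
  assert (0 <= Series (fun k => b (S K + k)%nat)).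
  { rewrite <- (Rmult_0_l (Series (fun k => b (S K + k)%nat))), <- Series_scal_l.
    apply Series_le. intros n; split; [lra|]. rewrite Rmult_0_l. apply Hb.
    apply (ex_series_incr_n b (S K)). exact Hex. }
  lra.
Qed.

Lemma ex_series_bound (b a : nat -> R) : (forall n, 0 <= b n <= a n) -> ex_series a -> ex_series b.
Proof.
  intros H Ha. apply (ex_series_le (K:=R_AbsRing) (V:=R_CompleteNormedModule) b a); auto.
  intros n. change (Rabs (b n) <= a n). rewrite Rabs_right. apply H. apply Rle_ge, H.
Qed.

Theorem lemma10 (n0 : nat) (adj : nat -> nat -> Prop) (p : R) :
  (1 < n0)%nat -> 0 < p <= 1 ->
  simple_graph n0 adj -> graph_connected n0 adj ->
  forall eps : R, 0 < eps ->
  exists veps : nat, forall (v : nat) (t : R),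
    (veps <= v)%nat -> 0 < t ->
    1 <= PV n0 t v / PU n0 t v <= 1 + eps.
Proof.
  intros Hn0 _ _ _ eps Heps.
  destruct (archimed_cor1 eps Heps) as [N [HN HN0]].
  exists (Nat.max (S n0) (S N)). intros v t Hv Ht.
  assert (H1 : (1 <= n0)%nat) by lia.
  set (a := fun k => njumps_prob n0 k t).
  assert (Ha : forall k, 0 < a k) by (intros; apply nj_pos; auto).
  assert (Hax : ex_series a) by (apply nj_ex; auto).
  set (q := fun k => tracked_jump n0 k v * a k).
  set (r := fun k => uniform_jump n0 k v * a k).
  assert (Hterm : forall k, 0 <= r k <= q k /\ q k <= (1 + eps) * r k /\ q k <= a k).
  { intros k. unfold q, r. rewrite tj_closed by lia. unfold uniform_jump.
    replace (Nat.leb 1 v) with true by (symmetry; apply Nat.leb_le; lia). simpl andb.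
    specialize (Ha k).
    destruct (Nat.leb v (n0 + k)) eqn:E.
    - apply Nat.leb_le in E.
      assert (Hm1 : INR N + 1 <= INR (n0 + k)).
      { rewrite <- S_INR. apply le_INR. lia. }
      assert (Hm3 : 3 <= INR (n0 + k)).
      { replace 3 with (INR 3) by (simpl; ring). apply le_INR. lia. }
      assert (HN' : 0 < INR N) by (apply lt_0_INR; lia).
      pose proof (ineq_main _ _ _ HN' HN Hm1 Hm3).
      assert (/ INR (n0 + k) <= / (INR (n0 + k) - 1)) by (apply Rinv_le_contravar; lra).
      assert (0 < / INR (n0 + k)) by (apply Rinv_0_lt_compat; lra).
      assert (/ (INR (n0 + k) - 1) <= 1).
      { rewrite <- Rinv_1. apply Rinv_le_contravar; lra. }
      repeat split.
      + apply Rmult_le_pos; lra.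
      + apply Rmult_le_compat_r; lra.
      + rewrite <- Rmult_assoc. apply Rmult_le_compat_r; lra.
      + rewrite <- (Rmult_1_l (a k)) at 2. apply Rmult_le_compat_r; lra.
    - rewrite !Rmult_0_l. repeat split; lra. }
  assert (Hqx : ex_series q).
  { apply (ex_series_bound q a); auto. intros n; destruct (Hterm n) as [[? ?] [? ?]]; split; lra. }
  assert (Hrx : ex_series r).
  { apply (ex_series_bound r q); auto. intros n; destruct (Hterm n) as [[? ?] [? ?]]; split; lra. }
  assert (HPU : 0 < Series r).
  { apply (series_pos r (v - n0)).
    - intros n; apply Hterm.
    - unfold r, uniform_jump.
      replace (Nat.leb 1 v) with true by (symmetry; apply Nat.leb_le; lia).
      replace (Nat.leb v (n0 + (v - n0))) with true by (symmetry; apply Nat.leb_le; lia).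
      simpl andb. apply Rmult_lt_0_compat. apply Rinv_0_lt_compat, lt_0_INR; lia. apply Ha.
    - exact Hrx. }
  assert (Hle1 : Series r <= Series q).
  { apply Series_le; auto. intros n; apply Hterm. }
  assert (Hle2 : Series q <= (1 + eps) * Series r).
  { rewrite <- Series_scal_l. apply Series_le.
    - intros n; destruct (Hterm n) as [[? ?] [? ?]]; split; lra.
    - apply (ex_series_scal_l (K:=R_AbsRing) (V:=R_NormedModule) (1 + eps) r). exact Hrx. }
  unfold PV, PU. change (1 <= Series q / Series r <= 1 + eps).
  split.
  - replace 1 with (Series r / Series r) by (field; lra).
    unfold Rdiv. apply Rmult_le_compat_r. left; apply Rinv_0_lt_compat; lra. exact Hle1.
  - replace (1 + eps) with ((1 + eps) * Series r / Series r) by (field; lra).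
    unfold Rdiv. apply Rmult_le_compat_r. left; apply Rinv_0_lt_compat; lra. exact Hle2.
Qed.
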